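(* Let $n,m\ge1$. For each $i\in[n]$ let $d_i$ be a positive integer and $p_{i0}<p_{i1}<\cdots<p_{id_i}$ reals, and let $\mathcal{X}=\prod_{i\in[n]}\{p_{i0},\dots,p_{id_i}\}$. Let $P=\{\boldsymbol{x}\in\mathbb{R}^n: A\boldsymbol{x}\ge \boldsymbol{h}\}$ be a polytope. For each $t\in[m]$ and $i\in[n]$ let $f^t_i:\{p_{i0},\dots,p_{id_i}\}\to[L^t_i,U^t_i]$ and let $\phi^t:\prod_{i\in[n]}[L^t_i,U^t_i]\to\mathbb{R}$ be arbitrary. Define the lifted affine functions $\ell^t_i(\boldsymbol{z}_i)=f^t_i(p_{i0})+\sum_{j\in[d_i]}(f^t_i(p_{ij})-f^t_i(p_{i,j-1}))z_{ij}$ and the finite set $$G=\bigl\{(\boldsymbol{z},\boldsymbol{\mu})\in\operatorname{vert}(\Delta)\times\mathbb{R}^m:\ \mu^t=\phi^t(\ell^t_1(\boldsymbol{z}_1),\dots,\ell^t_n(\boldsymbol{z}_n))\ \forall t\in[m]\bigr\}.$$ Let $E=\{(\boldsymbol{x},\boldsymbol{z},\boldsymbol{\mu}): (\boldsymbol{z},\boldsymbol{\mu})\in\operatorname{conv}(G),\ \boldsymbol{x}\in P,\ \boldsymbol{z}\in\{0,1\}^{\sum_i d_i},\ (x_i,\boldsymbol{z}_i)\in B_i\ \forall i\in[n]\}$. Then $E$ is an MIP formulation of the graph $\{(\boldsymbol{x},\boldsymbol{\mu}):\boldsymbol{x}\in P\cap\mathcal{X},\ \mu^t=\phi^t(f^t_1(x_1),\dots,f^t_n(x_n))\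 \forall t\in[m]\}$. Moreover, when the polyhedral constraint is absent (i.e. $P$ is replaced by $\mathbb{R}^n$), this formulation is ideal.
   Context: $[n]=\{1,\dots,n\}$. For a positive integer $d$, $\Delta^d=\{\boldsymbol{z}\in\mathbb{R}^d:1\ge z_1\ge z_2\ge\cdots\ge z_d\ge0\}$; $\Delta=\Delta^{d_1}\times\cdots\times\Delta^{d_n}$ with $\boldsymbol{z}=(\boldsymbol{z}_1,\dots,\boldsymbol{z}_n)$, $\boldsymbol{z}_i=(z_{i1},\dots,z_{id_i})$; its vertex set is $\operatorname{vert}(\Delta)=\Delta\cap\{0,1\}^{\sum_i d_i}$. The unary binarization polytope is $B_i=\{(x_i,\boldsymbol{z}_i): x_i=p_{i0}+\sum_{j\in[d_i]}(p_{ij}-p_{i,j-1})z_{ij},\ \boldsymbol{z}_i\in\Delta^{d_i}\}$. An MIP formulation of a set $S$ is a set $E=\{(\boldsymbol{x},\boldsymbol{y},\boldsymbol{z})\in Q:\boldsymbol{z}\text{ binary}\}$, $Q$ a polyhedron, whose projection onto the original variables equals $S$; it is ideal if every vertex of its LP relaxation $Q$ (obtained by dropping the binary requirement) has binary $\boldsymbol{z}$. *)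

(* Defs.v *)
From HB Require Import structures.
From mathcomp Require Import all_boot all_order all_algebra.
Set Implicit Arguments. Unset Strict Implicit. Unset Printing Implicit Defensive.
Import Order.TTheory GRing.Theory Num.Theory.
Local Open Scope ring_scope.

Section Geometry.
Variable R : realFieldType.

Definition in_conv (I : Type) (S : (I -> R) -> Prop) (y : I -> R) : Prop :=
  exists (k : nat) (lam : 'I_k -> R) (pt : 'I_k -> I -> R),
    [/\ forall j, 0 <= lam j, \sum_(j < k) lam j = 1, forall j, S (pt j) &
        forall c, y c = \sum_(j < k) lam j * pt j c].

Definition polyhedron (I : finType) (Q : (I -> R) -> Prop) : Prop :=
  exists (k : nat) (a : 'I_k -> I -> R) (b : 'I_k -> R),
    forall y, Q y <-> forall r, b r <= \sum_(c : I) a r c * y c.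

Definition vertex (I : Type) (Q : (I -> R) -> Prop) (y : I -> R) : Prop :=
  Q y /\ forall (y1 y2 : I -> R) (lam : R), Q y1 -> Q y2 -> 0 < lam < 1 ->
    (forall c, y c = lam * y1 c + (1 - lam) * y2 c) -> forall c, y1 c = y2 c.

Definition binary (I : Type) (z : I -> R) : Prop :=
  forall c, z c = 0 \/ z c = 1.

End Geometry.

(* z-coordinates: (i, j) with i : 'I_n and j : 'I_(d i); the Rocq index j
   stands for the paper's index j+1 in [d_i]. *)
Definition zidx (n : nat) (d : 'I_n -> nat) : finType := {i : 'I_n & 'I_(d i)}.
Definition zmidx (n m : nat) (d : 'I_n -> nat) : finType := (zidx d + 'I_m)%type.
Definition xzmidx (n m : nat) (d : 'I_n -> nat) : finType :=
  ('I_n + zmidx m d)%type.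

Section Binarization.
Variables (R : realFieldType) (n m : nat) (d : 'I_n -> nat).

Definition zc (i : 'I_n) (j : 'I_(d i)) : zidx d :=
  existT (fun i0 : 'I_n => 'I_(d i0)) i j.

Definition aff (i : 'I_n) (g : 'I_(d i).+1 -> R) (z : zidx d -> R) : R :=
  g ord0 + \sum_(j < d i) (g (lift ord0 j) - g (widen_ord (leqnSn _) j)) * z (zc j).

Definition in_Delta (i : 'I_n) (z : zidx d -> R) : Prop :=
  (forall j : 'I_(d i), 0 <= z (zc j) <= 1) /\
  (forall (j : 'I_(d i)) (hj : (j.+1 < d i)%N), z (zc (Ordinal hj)) <= z (zc j)).

Definition in_B (p : forall i : 'I_n, 'I_(d i).+1 -> R) (i : 'I_n) (xi : R)
  (z : zidx d -> R) : Prop :=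
  xi = aff (p i) z /\ in_Delta i z.

Definition zpart (w : zmidx m d -> R) : zidx d -> R := fun c => w (inl c).
Definition mupart (w : zmidx m d -> R) : 'I_m -> R := fun t => w (inr t).
Definition xpart (y : xzmidx m d -> R) : 'I_n -> R := fun i => y (inl i).
Definition zmpart (y : xzmidx m d -> R) : zmidx m d -> R := fun c => y (inr c).

Definition Gset (f : 'I_m -> forall i : 'I_n, 'I_(d i).+1 -> R)
  (phi : 'I_m -> ('I_n -> R) -> R) (w : zmidx m d -> R) : Prop :=
  [/\ forall i, in_Delta i (zpart w), binary (zpart w) &
      forall t, mupart w t = phi t (fun i => aff (f t i) (zpart w))].

(* LP relaxation Q of E (E = Q with z binary), for polyhedral constraint Pset *)
Definition relax (Pset : ('I_n -> R) -> Prop)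
  (p : forall i : 'I_n, 'I_(d i).+1 -> R)
  (f : 'I_m -> forall i : 'I_n, 'I_(d i).+1 -> R)
  (phi : 'I_m -> ('I_n -> R) -> R) (y : xzmidx m d -> R) : Prop :=
  [/\ in_conv (Gset f phi) (zmpart y), Pset (xpart y) &
      forall i, in_B p i (xpart y i) (zpart (zmpart y))].

(* the graph { (x, mu) : x in P cap X, mu^t = phi^t(f^t_1(x_1),...,f^t_n(x_n)) } ;
   f^t_i is given on the grid point index: f t i j = f^t_i(p_ij). *)
Definition graph (Pset : ('I_n -> R) -> Prop)
  (p : forall i : 'I_n, 'I_(d i).+1 -> R)
  (f : 'I_m -> forall i : 'I_n, 'I_(d i).+1 -> R)
  (phi : 'I_m -> ('I_n -> R) -> R) (x : 'I_n -> R) (mu : 'I_m -> R) : Prop :=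
  Pset x /\
  exists jx : forall i : 'I_n, 'I_(d i).+1,
    (forall i, x i = p i (jx i)) /\ (forall t, mu t = phi t (fun i => f t i (jx i))).

Definition mip_formulation (Q : (xzmidx m d -> R) -> Prop)
  (S : ('I_n -> R) -> ('I_m -> R) -> Prop) : Prop :=
  polyhedron Q /\
  forall x mu, S x mu <->
    exists y, [/\ Q y, binary (zpart (zmpart y)), xpart y = x & zmpart y \o inr = mu].

Definition ideal (Q : (xzmidx m d -> R) -> Prop) : Prop :=
  forall y, vertex Q y -> binary (zpart (zmpart y)).

End Binarization.

(* Main.v *)
Require Import Defs.
From HB Require Import structures.
From mathcomp Require Import all_boot all_order all_algebra.
From mathcomp Require Import ring lra.
From Stdlib Require Import FunctionalExtensionality.
Set Implicit Arguments. Unset Strict Implicit. Unset Printing Implicit Defensive.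
Import Order.TTheory GRing.Theory Num.Theory.
Local Open Scope ring_scope.
Section Poly.
Variable R : realFieldType.

Definition islin (I : finType) (F : (I -> R) -> R) :=
  exists a : I -> R, forall y, F y = \sum_c a c * y c.
Definition isaff (I : finType) (F : (I -> R) -> R) :=
  exists v : R, islin (fun y => F y - v).

Lemma islin_coord (I : finType) (c0 : I) : islin (fun y => y c0).
Proof.
exists (fun c => (c == c0)%:R) => y.
rewrite (bigD1 c0) //= eqxx mul1r big1 ?addr0 // => c /negPf ->; by rewrite mul0r.
Qed.

Lemma islin_add (I : finType) (F G : (I -> R) -> R) :
  islin F -> islin G -> islin (fun y => F y + G y).
Proof.
move=> [a Ha] [b Hb]; exists (fun c => a c + b c) => y.
by rewrite Ha Hb -big_split /=; apply: eq_bigr => c _; rewrite mulrDl.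
Qed.

Lemma islin_scale (I : finType) (F : (I -> R) -> R) k :
  islin F -> islin (fun y => k * F y).
Proof.
move=> [a Ha]; exists (fun c => k * a c) => y.
by rewrite Ha mulr_sumr; apply: eq_bigr => c _; rewrite mulrA.
Qed.

Lemma islin0 (I : finType) : islin (fun _ : I -> R => 0).
Proof. by exists (fun _ => 0) => y; rewrite big1 // => c _; rewrite mul0r. Qed.

Lemma islin_ext (I : finType) (F G : (I -> R) -> R) :
  (forall y, F y = G y) -> islin F -> islin G.
Proof. by move=> E [a Ha]; exists a => y; rewrite -E. Qed.

Lemma islin_opp (I : finType) (F : (I -> R) -> R) :
  islin F -> islin (fun y => - F y).
Proof.
move=> H; apply: islin_ext (islin_scale (-1) H) => y; by rewrite mulN1r.
Qed.

Lemma islin_sub (I : finType) (F G : (I -> R) -> R) :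
  islin F -> islin G -> islin (fun y => F y - G y).
Proof. by move=> HF HG; apply: islin_add HF (islin_opp HG). Qed.

Lemma islin_sum (I J : finType) (s : seq J) (P : pred J) (F : J -> (I -> R) -> R) :
  (forall j, islin (F j)) -> islin (fun y => \sum_(j <- s | P j) F j y).
Proof.
move=> H; elim: s => [|j s IH].
  by apply: islin_ext (islin0 I) => y; rewrite big_nil.
case Pj: (P j).
  by apply: islin_ext (islin_add (H j) IH) => y; rewrite big_cons Pj.
by apply: islin_ext IH => y; rewrite big_cons Pj.
Qed.

Lemma isaff_lin (I : finType) (F : (I -> R) -> R) : islin F -> isaff F.
Proof. by move=> H; exists 0; apply: islin_ext H => y; rewrite subr0. Qed.

Lemma isaff_const (I : finType) (v : R) : isaff (fun _ : I -> R => v).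
Proof. by exists v; apply: islin_ext (islin0 I) => y; rewrite subrr. Qed.

Lemma isaff_add (I : finType) (F G : (I -> R) -> R) :
  isaff F -> isaff G -> isaff (fun y => F y + G y).
Proof.
move=> [u Hu] [v Hv]; exists (u + v); apply: islin_ext (islin_add Hu Hv) => y.
by rewrite opprD addrACA.
Qed.

Lemma isaff_scale (I : finType) (F : (I -> R) -> R) k :
  isaff F -> isaff (fun y => k * F y).
Proof.
move=> [u Hu]; exists (k * u); apply: islin_ext (islin_scale k Hu) => y.
by rewrite mulrBr.
Qed.

Lemma isaff_ext (I : finType) (F G : (I -> R) -> R) :
  (forall y, F y = G y) -> isaff F -> isaff G.
Proof. by move=> E [v Hv]; exists v; apply: islin_ext Hv => y; rewrite E. Qed.

Lemma isaff_opp (I : finType) (F : (I -> R) -> R) :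
  isaff F -> isaff (fun y => - F y).
Proof. by move=> H; apply: isaff_ext (isaff_scale (-1) H) => y; rewrite mulN1r. Qed.

Lemma isaff_sub (I : finType) (F G : (I -> R) -> R) :
  isaff F -> isaff G -> isaff (fun y => F y - G y).
Proof. by move=> HF HG; apply: isaff_add HF (isaff_opp HG). Qed.

Lemma isaff_sum (I J : finType) (s : seq J) (P : pred J) (F : J -> (I -> R) -> R) :
  (forall j, isaff (F j)) -> isaff (fun y => \sum_(j <- s | P j) F j y).
Proof.
move=> H; elim: s => [|j s IH].
  by apply: isaff_ext (isaff_const I 0) => y; rewrite big_nil.
case Pj: (P j).
  by apply: isaff_ext (isaff_add (H j) IH) => y; rewrite big_cons Pj.
by apply: isaff_ext IH => y; rewrite big_cons Pj.
Qed.

Lemma poly_ext (I : finType) (Q1 Q2 : (I -> R) -> Prop) :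
  (forall y, Q1 y <-> Q2 y) -> polyhedron Q1 -> polyhedron Q2.
Proof.
move=> E [k [a [b H]]]; exists k, a, b => y; split.
  by move/E/H. by move/H/E.
Qed.

Lemma poly_True (I : finType) : polyhedron (fun _ : I -> R => True).
Proof. by exists 0%N, (fun _ _ => 0), (fun _ => 0) => y; split => // _ []. Qed.

Lemma poly_and (I : finType) (Q1 Q2 : (I -> R) -> Prop) :
  polyhedron Q1 -> polyhedron Q2 -> polyhedron (fun y => Q1 y /\ Q2 y).
Proof.
move=> [k1 [a1 [b1 H1]]] [k2 [a2 [b2 H2]]].
exists (k1 + k2)%N.
exists (fun r => match split r with inl r1 => a1 r1 | inr r2 => a2 r2 end).
exists (fun r => match split r with inl r1 => b1 r1 | inr r2 => b2 r2 end).
move=> y; split.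
  move=> [/H1 h1 /H2 h2] r; case: (split r) => [r1|r2]; [exact: h1|exact: h2].
move=> h; split.
  apply/H1 => r1; have := h (lshift k2 r1); by rewrite /= (unsplitK (inl r1)).
apply/H2 => r2; have := h (rshift k1 r2); by rewrite /= (unsplitK (inr r2)).
Qed.

Lemma poly_ge (I : finType) (F : (I -> R) -> R) (b : R) :
  isaff F -> polyhedron (fun y => b <= F y).
Proof.
move=> [v [a Ha]]; exists 1%N, (fun _ => a), (fun _ => b - v) => y; split.
  by move=> H _; rewrite -Ha lerBlDr subrK.
by move=> /(_ ord0); rewrite -Ha lerBlDr subrK.
Qed.

Lemma poly_le (I : finType) (F G : (I -> R) -> R) :
  isaff F -> isaff G -> polyhedron (fun y => F y <= G y).
Proof.
move=> HF HG; apply: poly_ext (poly_ge 0 (isaff_sub HG HF)) => y.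
by rewrite subr_ge0.
Qed.

Lemma poly_eq (I : finType) (F G : (I -> R) -> R) :
  isaff F -> isaff G -> polyhedron (fun y => F y = G y).
Proof.
move=> HF HG; apply: poly_ext (poly_and (poly_le HF HG) (poly_le HG HF)) => y.
split; first by move=> [h1 h2]; apply/eqP; rewrite eq_le h1 h2.
by move=> ->.
Qed.

Lemma poly_all_seq (I J : finType) (Q : J -> (I -> R) -> Prop) (s : seq J) :
  (forall j, polyhedron (Q j)) -> polyhedron (fun y => forall j, j \in s -> Q j y).
Proof.
move=> H; elim: s => [|j s IH].
  by apply: poly_ext (poly_True I) => y; split => // _ j.
apply: poly_ext (poly_and (H j) IH) => y; split.
  by move=> [h1 h2] j'; rewrite inE => /orP [/eqP -> //|]; apply: h2.
move=> h; split; first by apply: h; rewrite inE eqxx.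
by move=> j' js; apply: h; rewrite inE js orbT.
Qed.

Lemma poly_all (I J : finType) (Q : J -> (I -> R) -> Prop) :
  (forall j, polyhedron (Q j)) -> polyhedron (fun y => forall j, Q j y).
Proof.
move=> H; apply: poly_ext (poly_all_seq (enum J) H) => y; split.
  by move=> h j; apply: h; rewrite mem_enum.
by move=> h j _.
Qed.

Lemma poly_pre (I J : finType) (Q : (J -> R) -> Prop) (Phi : (I -> R) -> J -> R) :
  polyhedron Q -> (forall c, isaff (fun y => Phi y c)) ->
  polyhedron (fun y => Q (Phi y)).
Proof.
move=> [k [a [b H]]] HPhi.
apply: poly_ext (poly_all (fun r => poly_ge (b r) (isaff_sum (enum J) predT
   (fun c => isaff_scale (a r c) (HPhi c))))) => y.
split => h.
  apply/H => r; have := h r; by rewrite /= big_enum.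
move=> r; have := (proj1 (H _) h r); by rewrite big_enum.
Qed.

Lemma poly_respect (I : finType) (Q : (I -> R) -> Prop) y1 y2 :
  polyhedron Q -> (forall c, y1 c = y2 c) -> Q y1 -> Q y2.
Proof.
move=> [k [a [b H]]] E /H h; apply/H => r; have := h r.
by under eq_bigr do rewrite E.
Qed.

End Poly.

Section FM.
Variable R : realFieldType.

Lemma fm_core (k : nat) (al e : 'I_k -> R) :
  (forall r r', 0 < al r -> al r' < 0 -> - al r' * e r + al r * e r' <= 0) ->
  (forall r, al r = 0 -> e r <= 0) -> exists t, forall r, e r <= al r * t.
Proof.
move=> Hpn H0.
case: (pickP (fun r => 0 < al r)) => [r0 Hr0 | Hnp].
  case: (@arg_maxP _ _ _ r0 (fun r => 0 < al r) (fun r => e r / al r) Hr0) => rs Hrs Hmax.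
  exists (e rs / al rs) => r.
  case: (ltgtP (al r) 0) => Har.
  - have Hc := Hpn rs r Hrs Har.
    rewrite mulrA ler_pdivlMr //; lra.
  - by rewrite -ler_pdivrMl // mulrC; apply: Hmax.
  - by rewrite Har mul0r; apply: H0.
case: (pickP (fun r => al r < 0)) => [r0 Hr0 | Hnn].
  case: (@arg_minP _ _ _ r0 (fun r => al r < 0) (fun r => e r / al r) Hr0) => rs Hrs Hmin.
  exists (e rs / al rs) => r.
  case: (ltgtP (al r) 0) => Har.
  - by move: (Hmin r Har); rewrite /= ler_ndivlMr // mulrC.
  - by have := Hnp r; rewrite Har.
  - by rewrite Har mul0r; apply: H0.
exists 0 => r; rewrite mulr0; apply: H0.
case: (ltgtP (al r) 0) => // Har.
- by have := Hnn r; rewrite Har.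
- by have := Hnp r; rewrite Har.
Qed.

End FM.

Section Proj.
Variable R : realFieldType.

Definition join (I J : finType) (y : I -> R) (l : J -> R) : I + J -> R :=
  fun o => match o with inl c => y c | inr j => l j end.

Lemma islin_sumc (I : finType) (a : I -> R) : islin (fun y : I -> R => \sum_c a c * y c).
Proof. by exists a. Qed.

Lemma elim1 (I : finType) (Q : (I + 'I_1 -> R) -> Prop) :
  polyhedron Q -> polyhedron (fun y => exists t, Q (join y (fun _ => t))).
Proof.
move=> [k [a [b H]]].
pose al r := a r (inr ord0).
pose s r (y : I -> R) := \sum_c a r (inl c) * y c.
have Hsum r y t : \sum_c a r c * join y (fun _ => t) c = s r y + al r * t.
  by rewrite big_sumType big_ord1.
pose C (rr : 'I_k * 'I_k) (y : I -> R) : Prop :=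
  if (0 < al rr.1) && (al rr.2 < 0) then
    is_true (- al rr.2 * (b rr.1 - s rr.1 y) + al rr.1 * (b rr.2 - s rr.2 y) <= 0)
  else if (rr.1 == rr.2) && (al rr.1 == 0) then is_true (b rr.1 - s rr.1 y <= 0) else True.
have Hs r : isaff (s r) by apply: isaff_lin; apply: islin_sumc.
have HC rr : polyhedron (C rr).
  rewrite /C; case: ((0 < al rr.1) && (al rr.2 < 0)).
    apply: poly_le; last exact: isaff_const.
    apply: isaff_add; apply: isaff_scale; apply: isaff_sub => //; exact: isaff_const.
  case: ((rr.1 == rr.2) && (al rr.1 == 0)); last exact: poly_True.
  apply: poly_le; last exact: isaff_const.
  apply: isaff_sub => //; exact: isaff_const.
apply: poly_ext (poly_all HC) => y; split.
  move=> hC.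
  have [t Ht] : exists t, forall r, b r - s r y <= al r * t.
    apply: fm_core.
      move=> r r' h1 h2; have := hC (r, r'); by rewrite /C /= h1 h2.
    move=> r h0; have := hC (r, r); by rewrite /C /= h0 ltxx !eqxx.
  exists t; apply/H => r; rewrite Hsum; have := Ht r; lra.
move=> [t /H Ht] [r r'] ; rewrite /C /=.
have h1 := Ht r; have h2 := Ht r'; rewrite Hsum in h1; rewrite Hsum in h2.
case: ifP => [/andP [p1 p2]|_].
  have e1 : b r - s r y <= al r * t by lra.
  have e2 : b r' - s r' y <= al r' * t by lra.
  have f1 : - al r' * (b r - s r y) <= - al r' * (al r * t).
    by rewrite ler_wpM2l // oppr_ge0 ltW.
  have f2 : al r * (b r' - s r' y) <= al r * (al r' * t).
    by rewrite ler_wpM2l // ltW.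
  have : - al r' * (al r * t) + al r * (al r' * t) = 0 by rewrite mulNr !mulrA [al r' * al r]mulrC addNr.
  lra.
case: ifP => // /andP [_ /eqP a0]; rewrite a0 mul0r in h1; lra.
Qed.

End Proj.

Section Proj2.
Variable R : realFieldType.

Lemma isaff_coord (I : finType) (c : I) : isaff (fun y : I -> R => y c).
Proof. exact/isaff_lin/islin_coord. Qed.

Lemma projK (K : nat) : forall (I : finType) (Q : (I + 'I_K -> R) -> Prop),
  polyhedron Q -> polyhedron (fun y => exists l : 'I_K -> R, Q (join y l)).
Proof.
elim: K => [|K IH] I Q HQ.
  have HP := poly_pre (Phi := fun y : I -> R => join y (fun _ : 'I_0 => 0)) HQ.
  apply: poly_ext (HP _) => [y|]; last first.
    by case=> [c|j]; [exact: isaff_coord|exact: isaff_const].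
  split; first by exists (fun _ => 0).
  move=> [l Hl]; apply: poly_respect Hl => //; by case=> [c|[]].
pose Phi (w : (I + 'I_K) + 'I_1 -> R) : I + 'I_K.+1 -> R :=
  fun o => match o with inl c => w (inl (inl c))
   | inr j => match unlift ord_max j with Some j' => w (inl (inr j')) | None => w (inr ord0) end end.
have HQ2 : polyhedron (fun w => Q (Phi w)).
  apply: (poly_pre (Phi := Phi) HQ) => -[c|j]; first exact: isaff_coord.
  rewrite /Phi; case: (unlift ord_max j) => [j'|]; exact: isaff_coord.
have HQ3 := elim1 HQ2.
have HQ4 := IH _ _ HQ3.
apply: poly_ext HQ4 => y; split.
  move=> [l' [t Ht]].
  exists (fun j => match unlift ord_max j with Some j' => l' j' | None => t end).
  exact: Ht.
move=> [l Hl]; exists (fun j' => l (lift ord_max j')), (l ord_max).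
apply: poly_respect Hl => //; case=> [c|j] //=.
rewrite /Phi; case: unliftP => [j'|] -> //.
Qed.

Lemma projJ (I J : finType) (Q : (I + J -> R) -> Prop) :
  polyhedron Q -> polyhedron (fun y => exists l : J -> R, Q (join y l)).
Proof.
move=> HQ.
have HQ2 : polyhedron (fun w : I + 'I_#|J| -> R =>
   Q (fun o => match o with inl c => w (inl c) | inr j => w (inr (enum_rank j)) end)).
  by apply: (poly_pre (Phi := fun (w : I + 'I_#|J| -> R) o => match o with inl c => w (inl c) | inr j => w (inr (enum_rank j)) end) HQ) => -[c|j]; exact: isaff_coord.
apply: poly_ext (projK HQ2) => y; split.
  move=> [l Hl]; exists (fun j => l (enum_rank j)); exact: Hl.
move=> [l Hl]; exists (fun j => l (enum_val j)).
apply: poly_respect Hl => //; case=> [c|j] //=; by rewrite enum_rankK.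
Qed.

End Proj2.

Section Stair.
Variable R : realFieldType.

Lemma stair (D : nat) (z : nat -> R) :
  (forall j, (j < D)%N -> z j = 0 \/ z j = 1) ->
  (forall j, (j.+1 < D)%N -> z j.+1 <= z j) ->
  exists K, (K <= D)%N /\ forall j, (j < D)%N -> z j = (j < K)%:R.
Proof.
elim: D => [|D IH] Hb Hm; first by exists 0%N.
have [K [KD HK]] : exists K, (K <= D)%N /\ forall j, (j < D)%N -> z j = (j < K)%:R.
  apply: IH => j hj; [apply: Hb|apply: Hm]; exact: ltnW.
case: (ltnP K D) => KD'.
  exists K; split; first exact: ltnW.
  move=> j hj; have [hjD|hjD|->] := ltngtP j D; first exact: HK.
    by rewrite ltnS leqNgt hjD in hj.
  have -> : (D < K)%N = false by apply/negbTE; rewrite -leqNgt ltnW.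
  clear hj; case: D IH Hb Hm KD HK KD' => // D' _ Hb Hm _ HK KD'.
  have h1 := Hm D' (ltnSn _); have h2 := HK D' (ltnSn _).
  have e : (D' < K)%N = false by apply/negbTE; rewrite -leqNgt -ltnS.
  rewrite e in h2.
  case: (Hb D'.+1 (ltnSn _)) => // h3.
  rewrite h2 h3 /= in h1; lra.
have KeqD : K = D by apply/eqP; rewrite eqn_leq KD KD'.
case: (Hb D (ltnSn _)) => h.
  exists K; split; first by rewrite KeqD.
  move=> j hj; have [hjD|hjD|->] := ltngtP j D; first exact: HK.
    by rewrite ltnS leqNgt hjD in hj.
  by rewrite KeqD ltnn h.
exists D.+1; split => // j hj; have [hjD|hjD|->] := ltngtP j D.
- by rewrite HK // KeqD hjD ltnS ltnW.
- by rewrite ltnS leqNgt hjD in hj.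
- by rewrite ltnSn h.
Qed.

End Stair.

Section Main.
Variables (R : realFieldType) (n m : nat) (d : 'I_n -> nat).
Unset Implicit Arguments.
Variables (f : 'I_m -> forall i : 'I_n, 'I_(d i).+1 -> R)
  (phi : 'I_m -> ('I_n -> R) -> R).
Set Implicit Arguments.

Definition JX := {dffun forall i : 'I_n, 'I_(d i).+1}.

Definition zst (jx : forall i : 'I_n, 'I_(d i).+1) : zidx d -> R :=
  fun c => ((tagged c : nat) < jx (tag c))%:R.

Definition gpt (jx : forall i : 'I_n, 'I_(d i).+1) : zmidx m d -> R :=
  fun w => match w with inl c => zst jx c | inr t => phi t (fun i => f t i (jx i)) end.

Lemma aff_st i (g : 'I_(d i).+1 -> R) (K : 'I_(d i).+1) (z : zidx d -> R) :
  (forall j : 'I_(d i), z (zc j) = (j < K)%:R) -> aff g z = g K.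
Proof.
move=> Hz; rewrite /aff.
pose gn (k : nat) := g (inord k).
have E (j : 'I_(d i)) : (g (lift ord0 j) - g (widen_ord (leqnSn _) j)) * z (zc j)
    = (gn j.+1 - gn j) * (j < K)%:R.
  rewrite Hz /gn; congr ((g _ - g _) * _); apply: val_inj;
    rewrite /= inordK //.
  by rewrite ltnS.
  by rewrite ltnS; apply: ltnW.
rewrite (eq_bigr _ (fun j _ => E j)).
rewrite -(big_mkord xpredT (fun j => (gn j.+1 - gn j) * (j < K)%:R)).
rewrite (big_cat_nat (leq0n K) (leq_ord K)) /=.
rewrite [X in _ + (_ + X)](eq_big_nat _ _ (F2 := fun _ => 0)); last first.
  by move=> j /andP [Kj _]; rewrite ltnNge Kj mulr0.
rewrite big1_eq addr0.
rewrite (eq_big_nat _ _ (F2 := fun j => gn j.+1 - gn j)); last first.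
  by move=> j /andP [_ jK]; rewrite jK mulr1.
rewrite telescope_sumr // /gn inord_val.
have -> : (inord 0 : 'I_(d i).+1) = ord0 by apply: val_inj; rewrite /= inordK.
by rewrite addrC subrK.
Qed.


Lemma zst_Delta (jx : forall i : 'I_n, 'I_(d i).+1) i : in_Delta i (zst jx).
Proof.
split.
  by move=> j; rewrite /zst /=; case: (j < jx i)%N; rewrite ?ler01 ?lexx.
move=> j hj; rewrite /zst /=.
case E: (j.+1 < jx i)%N; last by case: (j < jx i)%N; rewrite ?ler01 ?lexx.
by rewrite (ltnW E).
Qed.

Lemma gpt_G (jx : forall i : 'I_n, 'I_(d i).+1) : Gset f phi (gpt jx).
Proof.
split.
- move=> i; exact: zst_Delta.
- by move=> c; rewrite /zpart /= /zst; case: (_ < _)%N; [right|left].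
- move=> t; rewrite /mupart /=; congr (phi t); apply: functional_extensionality => i.
  by rewrite (aff_st _ (K := jx i)).
Qed.

Lemma G_gpt (w : zmidx m d -> R) : Gset f phi w -> exists jx : JX, forall c, w c = gpt jx c.
Proof.
case=> HD Hb Hmu.
have HK i : exists K : 'I_(d i).+1, forall j : 'I_(d i), zpart w (zc j) = (j < K)%:R.
  pose zn (j : nat) := match (insub j : option 'I_(d i)) with
                       Some o => zpart w (zc o) | None => 0 end.
  have zn_o (o : 'I_(d i)) : zn o = zpart w (zc o) by rewrite /zn valK.
  have [K [KD HK]] : exists K, (K <= d i)%N /\ forall j, (j < d i)%N -> zn j = (j < K)%:R.
    apply: stair.
  - move=> j hj; have := zn_o (Ordinal hj); rewrite /= => ->; exact: Hb.
  - move=> j hj; have := (HD i).2 (Ordinal (ltnW hj)) hj.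
    by rewrite -!zn_o.
  exists (@Ordinal (d i).+1 K KD) => j; rewrite -zn_o; exact: HK.
have [Kf HKf] := fin_all_exists HK.
exists (finfun Kf) => -[[i j]|t] /=.
  by rewrite /zst /= ffunE; exact: HKf.
have := Hmu t; rewrite /mupart => ->; congr (phi t); apply: functional_extensionality => i.
by rewrite ffunE (aff_st _ (K := Kf i)).
Qed.


Lemma sum_enum_val (F : JX -> R) : \sum_(i < #|JX|) F (enum_val i) = \sum_jx F jx.
Proof. by rewrite -big_enum_val. Qed.

Lemma conv_char (W : zmidx m d -> R) :
  in_conv (Gset f phi) W <->
  exists lam : JX -> R, [/\ forall j, 0 <= lam j, \sum_j lam j = 1 &
     forall c, W c = \sum_j lam j * gpt j c].
Proof.
split.
  move=> [k [lam [pt [H0 H1 HG Hc]]]].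
  have [jxs Hjxs] := fin_all_exists (fun j => G_gpt (HG j)).
  pose lam' (jx : JX) := \sum_(j | jxs j == jx) lam j.
  have key (F : JX -> R) : \sum_j lam j * F (jxs j) = \sum_jx lam' jx * F jx.
    rewrite (partition_big jxs xpredT) //=; apply: eq_bigr => jx _.
    by rewrite mulr_suml; apply: eq_bigr => j /eqP <-.
  exists lam'; split.
  - by move=> jx; apply: sumr_ge0 => j _.
  - have := key (fun _ => 1).
    rewrite (eq_bigr _ (fun j _ => mulr1 (lam j))) (eq_bigr _ (fun j _ => mulr1 (lam' j))).
    by move=> <-.
  - move=> c; rewrite Hc -key; apply: eq_bigr => j _; by rewrite Hjxs.
move=> [lam [H0 H1 Hc]].
exists #|JX|, (fun i : 'I_#|JX| => lam (enum_val i)), (fun i : 'I_#|JX| => gpt (enum_val i : JX)); split.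
- by move=> i.
- by rewrite (sum_enum_val lam).
- move=> i; exact: gpt_G.
- by move=> c; rewrite Hc (sum_enum_val (fun j => lam j * gpt j c)).
Qed.


Lemma aff_ext i (g : 'I_(d i).+1 -> R) (z1 z2 : zidx d -> R) :
  (forall j : 'I_(d i), z1 (zc j) = z2 (zc j)) -> aff g z1 = aff g z2.
Proof. by move=> E; rewrite /aff; congr (_ + _); apply: eq_bigr => j _; rewrite E. Qed.

Lemma aff_comb i (g : 'I_(d i).+1 -> R) (z z1 z2 : zidx d -> R) (a : R) :
  (forall j : 'I_(d i), z (zc j) = a * z1 (zc j) + (1 - a) * z2 (zc j)) ->
  aff g z = a * aff g z1 + (1 - a) * aff g z2.
Proof.
move=> E; rewrite /aff.
set c := fun j : 'I_(d i) => g (lift ord0 j) - g (widen_ord (leqnSn (d i)) j).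
have -> : \sum_(j < d i) c j * z (zc j) =
   a * \sum_(j < d i) c j * z1 (zc j) + (1 - a) * \sum_(j < d i) c j * z2 (zc j).
  rewrite !mulr_sumr -big_split /=; apply: eq_bigr => j _; rewrite E; ring.
ring.
Qed.

Lemma zst01 (jx : forall i : 'I_n, 'I_(d i).+1) c : 0 <= zst jx c <= 1.
Proof. by rewrite /zst; case: (_ < _)%N; rewrite ?ler01 ?lexx. Qed.

Lemma conv_Delta (W : zmidx m d -> R) : in_conv (Gset f phi) W -> forall i, in_Delta i (zpart W).
Proof.
move=> /conv_char [lam [H0 H1 Hc]] i; split.
  move=> j; rewrite /zpart Hc; apply/andP; split.
    apply: sumr_ge0 => jx _; apply: mulr_ge0 => //; by case/andP: (zst01 jx (zc j)).
  rewrite -H1; apply: ler_sum => jx _; apply: ler_piMr => //.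
  by case/andP: (zst01 jx (zc j)).
move=> j hj; rewrite /zpart !Hc; apply: ler_sum => jx _; apply: ler_wpM2l => //.
exact: (zst_Delta jx i).2.
Qed.


Lemma Delta_poly i : polyhedron (fun y : xzmidx m d -> R => in_Delta i (zpart (zmpart y))).
Proof.
have H : polyhedron (fun y : xzmidx m d -> R =>
   (forall j : 'I_(d i), 0 <= y (inr (inl (zc j))) /\ y (inr (inl (zc j))) <= 1) /\
   (forall j j' : 'I_(d i), if (j' == j.+1 :> nat) then is_true (y (inr (inl (zc j'))) <= y (inr (inl (zc j)))) else True)).
  apply: poly_and; apply: poly_all => j.
    apply: poly_and; [apply: poly_ge|apply: poly_le]; try exact: isaff_coord; exact: isaff_const.
  apply: poly_all => j'; case: (j' == j.+1 :> nat); last exact: poly_True.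
  apply: poly_le; exact: isaff_coord.
apply: poly_ext H => y; split.
  move=> [H1 H2]; split.
    by move=> j; have [-> ->] := H1 j.
  move=> j hj; have := H2 j (Ordinal hj); by rewrite /= eqxx.
move=> [H1 H2]; split.
  by move=> j; have /andP [-> ->] := H1 j.
move=> j j'; case: eqP => // E.
have hj : (j.+1 < d i)%N by rewrite -E.
have -> : j' = Ordinal hj by apply: val_inj.
exact: H2.
Qed.

Lemma relax_poly (p : forall i : 'I_n, 'I_(d i).+1 -> R) (Pset : ('I_n -> R) -> Prop) :
  polyhedron Pset -> polyhedron (relax Pset p f phi).
Proof.
move=> HP.
have HQ1 : polyhedron (fun y : xzmidx m d -> R => in_conv (Gset f phi) (zmpart y)).
  pose Q0 (w : xzmidx m d + JX -> R) := ((forall j, 0 <= w (inr j)) /\ \sum_j w (inr j) = 1)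
      /\ forall c, w (inl (inr c)) = \sum_j w (inr j) * gpt j c.
  have HQ0 : polyhedron Q0.
    apply: poly_and; first apply: poly_and.
    - apply: poly_all => j; apply: poly_ge; exact: isaff_coord.
    - apply: poly_eq; [apply: isaff_sum => j; exact: isaff_coord | exact: isaff_const].
    - apply: poly_all => c; apply: poly_eq; first exact: isaff_coord.
      apply: isaff_sum => j.
      apply: (isaff_ext (F := fun w => gpt j c * w (inr j))); first by move=> w; rewrite mulrC.
      apply: isaff_scale; exact: isaff_coord.
  apply: poly_ext (projJ HQ0) => y; split.
    move=> [lam [[H0 H1] Hc]]; apply/conv_char; exists lam; split => //.
  move/conv_char=> [lam [H0 H1 Hc]]; exists lam; split => //.
have HQ2 : polyhedron (fun y : xzmidx m d -> R => Pset (xpart y)).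
  apply: (poly_pre (Phi := fun y : xzmidx m d -> R => xpart y) HP) => i.
  exact: isaff_coord.
have HQ3 : polyhedron (fun y : xzmidx m d -> R =>
    forall i, in_B p i (xpart y i) (zpart (zmpart y))).
  apply: poly_all => i; apply: poly_and; last exact: Delta_poly.
  apply: poly_eq; first exact: isaff_coord.
  rewrite /aff; apply: isaff_add; first exact: isaff_const.
  apply: isaff_sum => j; apply: isaff_scale; exact: isaff_coord.
apply: poly_ext (poly_and HQ1 (poly_and HQ2 HQ3)) => y; split.
  by move=> [h1 [h2 h3]]; split.
by move=> [h1 h2 h3].
Qed.


Lemma mip_iff (p : forall i : 'I_n, 'I_(d i).+1 -> R) (Pset : ('I_n -> R) -> Prop) x mu :
  graph Pset p f phi x mu <->
  exists y, [/\ relax Pset p f phi y, binary (zpart (zmpart y)), xpart y = x &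
                zmpart y \o inr = mu].
Proof.
split.
  move=> [HP [jx [Hx Hmu]]].
  exists (fun o => match o with inl i => x i | inr w => gpt jx w end); split => //.
  - split => //.
    + exists 1%N, (fun _ => 1), (fun _ => gpt jx); split.
      * by move=> _; rewrite ler01.
      * by rewrite big_ord1.
      * by move=> _; exact: gpt_G.
      * by move=> c; rewrite big_ord1 mul1r.
    + move=> i; split; last exact: zst_Delta.
      by rewrite /xpart Hx (aff_st _ (K := jx i)).
  - by case: (gpt_G jx) => _ Hb _; exact: Hb.
  - by apply: functional_extensionality => t; rewrite Hmu.
move=> [y [[Hconv HP HB] Hbin Hx Hmu]].
have [lam [H0 H1 Hc]] := proj1 (conv_char _) Hconv.
set z := zpart (zmpart y).
have claim jx : lam jx != 0 -> forall c, zst jx c = z c.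
  move=> Hl c.
  have Hzc : z c = \sum_j lam j * zst j c by rewrite /z /zpart Hc.
  have Hge j : 0 <= lam j * zst j c by apply: mulr_ge0 => //; case/andP: (zst01 j c).
  case: (Hbin c) => Ez; rewrite -/z in Ez.
    have := @psumr_eq0P _ _ xpredT (fun j => lam j * zst j c) (fun j _ => Hge j).
    move=> /(_ _ jx isT); rewrite -Hzc Ez => /(_ erefl) /eqP.
    by rewrite mulf_eq0 (negPf Hl) /= => /eqP.
  have Hge' j : 0 <= lam j * (1 - zst j c).
    by apply: mulr_ge0 => //; rewrite subr_ge0; case/andP: (zst01 j c).
  have Hs : \sum_j lam j * (1 - zst j c) = 0.
    under eq_bigr do rewrite mulrBr mulr1.
    by rewrite sumrB H1 -Hzc Ez subrr.
  have := @psumr_eq0P _ _ xpredT (fun j => lam j * (1 - zst j c)) (fun j _ => Hge' j) Hs jx isT.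
  move/eqP; rewrite mulf_eq0 (negPf Hl) /= subr_eq0 => /eqP <-.
  by rewrite Ez.
have HG : Gset f phi (zmpart y).
  split.
  - exact: conv_Delta.
  - exact: Hbin.
  - move=> t; rewrite /mupart Hc.
    have -> : \sum_j lam j * gpt j (inr t) =
              \sum_j lam j * phi t (fun i => aff (f t i) (zpart (zmpart y))).
      apply: eq_bigr => jx _; case: (eqVneq (lam jx) 0) => [->|Hl]; first by rewrite !mul0r.
      congr (_ * _); rewrite /gpt; congr (phi t); apply: functional_extensionality => i.
      rewrite -(aff_st _ (K := jx i) (z := zst jx)) //; apply: aff_ext => j.
      exact: claim.
    by rewrite -mulr_suml H1 mul1r.
have [jx Hjx] := G_gpt HG.
split; first by rewrite -Hx.
exists jx; split.
  move=> i; rewrite -Hx; case: (HB i) => -> _.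
  rewrite (aff_st _ (K := jx i)) // => j.
  by have := Hjx (inl (zc j)).
move=> t; rewrite -Hmu /=; exact: (Hjx (inr t)).
Qed.


Lemma ideal_true (p : forall i : 'I_n, 'I_(d i).+1 -> R) :
  ideal (relax (fun _ => True) p f phi).
Proof.
move=> y [[Hconv _ HB] Hv].
have [lam [H0 H1 Hc]] := proj1 (conv_char _) Hconv.
have [jx0 Hpos] : exists jx0, 0 < lam jx0.
  case: (pickP (fun j => 0 < lam j)) => [j Hj|Hn]; first by exists j.
  have : \sum_j lam j = 0.
    by apply: big1 => j _; apply/eqP; rewrite eq_le H0 andbT leNgt Hn.
  by rewrite H1 => /eqP; rewrite oner_eq0.
set mu := lam jx0.
have Hrest : \sum_(j | j != jx0) lam j = 1 - mu.
  have := H1; rewrite (bigD1 jx0) //= => E; rewrite -/mu in E; lra.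
suff Hy : forall c, zmpart y c = gpt jx0 c.
  move=> c; rewrite /zpart Hy; case: (gpt_G jx0) => _ Hb _; exact: Hb c.
case: (eqVneq mu 1) => Hmu1.
  have Hz : forall j, j != jx0 -> lam j = 0.
    move=> j hj.
    have := @psumr_eq0P _ _ (fun j => j != jx0) lam (fun j _ => H0 j).
    by rewrite Hrest Hmu1 subrr => /(_ erefl); apply.
  move=> c; rewrite Hc (bigD1 jx0) //= big1 ?addr0; first by rewrite -/mu Hmu1 mul1r.
  by move=> j /Hz ->; rewrite mul0r.
have Hmu1' : 0 < 1 - mu.
  rewrite lt0r subr_eq0 eq_sym Hmu1 /= -Hrest; exact: sumr_ge0.
pose lam' j := if j == jx0 then 0 else lam j / (1 - mu).
pose W c := \sum_j lam' j * gpt j c.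
have HW : in_conv (Gset f phi) W.
  apply/conv_char; exists lam'; split => //.
    move=> j; rewrite /lam'; case: eqP => _ //; apply: divr_ge0 => //; exact: ltW.
  rewrite (bigD1 jx0) //= /lam' eqxx add0r.
  rewrite (eq_bigr (fun j => lam j / (1 - mu))); last by move=> j /negPf ->.
  by rewrite -mulr_suml Hrest divff // lt0r_neq0.
pose lft (V : zmidx m d -> R) : xzmidx m d -> R :=
  fun o => match o with inl i => aff (p i) (zpart V) | inr c => V c end.
have Hlift V : in_conv (Gset f phi) V -> relax (fun _ => True) p f phi (lft V).
  move=> hV; split => // i; split => //; exact: conv_Delta.
have Hg : in_conv (Gset f phi) (gpt jx0).
  exists 1%N, (fun _ => 1), (fun _ => gpt jx0); split.
  - by move=> _; rewrite ler01.
  - by rewrite big_ord1.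
  - by move=> _; exact: gpt_G.
  - by move=> c; rewrite big_ord1 mul1r.
have Hzm : forall c, zmpart y c = mu * gpt jx0 c + (1 - mu) * W c.
  move=> c; rewrite Hc (bigD1 jx0) //=; congr (_ + _).
  rewrite /W mulr_sumr [in RHS](bigD1 jx0) //= /lam' eqxx mul0r mulr0 add0r.
  apply: eq_bigr => j /negPf ->.
  by rewrite mulrA (mulrC (1 - mu)) divfK // lt0r_neq0.
have Hmu : 0 < mu < 1 by rewrite Hpos /= -subr_gt0.
have Hvert := Hv (lft (gpt jx0)) (lft W) mu (Hlift _ Hg) (Hlift _ HW) Hmu.
have Hcomb : forall c, y c = mu * lft (gpt jx0) c + (1 - mu) * lft W c.
  case=> [i|c]; last exact: Hzm.
  have E := (HB i).1; rewrite /xpart in E; rewrite E /=; apply: aff_comb => j.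
  exact: (Hzm (inl (zc j))).
move=> c; have E := Hvert Hcomb (inr c); rewrite /= in E.
rewrite Hzm -E; ring.
Qed.

End Main.

Theorem lemma1 (R : realFieldType) (n m : nat) (d : 'I_n -> nat)
  (p : forall i : 'I_n, 'I_(d i).+1 -> R)
  (k : nat) (A : 'I_k -> 'I_n -> R) (h : 'I_k -> R)
  (L U : 'I_m -> 'I_n -> R)
  (f : 'I_m -> forall i : 'I_n, 'I_(d i).+1 -> R)
  (phi : 'I_m -> ('I_n -> R) -> R) :
  (0 < n)%N -> (0 < m)%N ->
  (forall i, (0 < d i)%N) ->
  (forall i (j j' : 'I_(d i).+1), (j < j')%N -> p i j < p i j') ->
  (* P = { x : A x >= h } is a polytope (bounded) *)
  (exists M : R, forall x : 'I_n -> R,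
      (forall r, h r <= \sum_(i < n) A r i * x i) -> forall i, `|x i| <= M) ->
  (forall t i j, L t i <= f t i j <= U t i) ->
  let P := fun x : 'I_n -> R => forall r, h r <= \sum_(i < n) A r i * x i in
  mip_formulation (relax P p f phi) (graph P p f phi) /\
  mip_formulation (relax (fun _ => True) p f phi) (graph (fun _ => True) p f phi) /\
  ideal (relax (fun _ => True) p f phi).
Proof.
move=> _ _ _ _ _ _ P; split; [|split].
- split; last by move=> x mu; exact: mip_iff.
  apply: relax_poly; exists k, A, h => x; by split.
- split; last by move=> x mu; exact: mip_iff.
  apply: relax_poly; exact: poly_True.
- exact: ideal_true.
Qed.
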